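(* Let $S$ be a $0$-left cancellative semigroup which is categorical at zero. Then for every $\theta$-constructible set $X\subseteq S'$ there is a right ideal $R$ of $S$ such that $X=R\setminus\{0\}$.
   Context: $S$ is a semigroup with zero $0$; $S'=S\setminus\{0\}$. $S$ is $0$-left cancellative if $st=sr\neq0$ implies $t=r$. $S$ is categorical at zero if for all $r,s,t\in S$, $rs\neq0$ and $st\neq0$ imply $rst\neq0$. For $s\in S$ let $F_s=\{x\in S': sx\neq0\}$, $E_s=sS\setminus\{0\}$, and let $\theta_s:F_s\to E_s$, $\theta_s(x)=sx$ (a bijection, viewed as a partial bijection of $S'$). The inverse hull $\mathcal H(S)$ is the inverse subsemigroup of the symmetric inverse semigroup $\mathcal I(S')$ of all partial bijections of $S'$ generated by $\{\theta_s:s\in S\}$. A subset $X\subseteq S'$ is $\theta$-constructible if the identity map $\mathrm{id}_X$ belongs to $\mathcal H(S)$. A right ideal is a subset $R\subseteq S$ with $RS\subseteq R$ (it contains $0$). *)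

(* Defs.v *)
Set Implicit Arguments.

Section Hull.
Variables (S : Type) (mul : S -> S -> S) (z : S).

(* Partial maps of S' = S \ {z} are represented as (functional, injective)
   relations: pmap x y means "x is in the domain and is sent to y". *)
Definition pmap := S -> S -> Prop.

Definition theta (s : S) : pmap :=
  fun x y => x <> z /\ mul s x <> z /\ y = mul s x.

Definition pcomp (g h : pmap) : pmap := fun x w => exists y, h x y /\ g y w.
Definition pinv (h : pmap) : pmap := fun x y => h y x.

(* The inverse hull H(S): the inverse subsemigroup of I(S') generated by the
   theta_s, i.e. the smallest set containing all theta_s and closed under
   composition and inversion. *)
Inductive hull : pmap -> Prop :=
  | hull_theta : forall s, hull (theta s)
  | hull_comp : forall g h, hull g -> hull h -> hull (pcomp g h)
  | hull_inv : forall h, hull h -> hull (pinv h).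

(* X subset of S' is theta-constructible iff id_X belongs to H(S)
   (equality of partial maps is extensional equality of their graphs). *)
Definition theta_constructible (X : S -> Prop) : Prop :=
  exists h, hull h /\ forall x y, h x y <-> (x = y /\ X x).

Definition right_ideal (R : S -> Prop) : Prop :=
  R z /\ forall r s, R r -> R (mul r s).

End Hull.

(* Main.v *)
Require Import Defs.
From Stdlib Require Import Classical.

Theorem proposition4p4 (S : Type) (mul : S -> S -> S) (z : S)
  (mul_assoc : forall a b c, mul a (mul b c) = mul (mul a b) c)
  (zero_l : forall a, mul z a = z)
  (zero_r : forall a, mul a z = z)
  (left_canc0 : forall s t r, mul s t = mul s r -> mul s t <> z -> t = r)
  (categorical0 : forall r s t, mul r s <> z -> mul s t <> z -> mul (mul r s) t <> z)
  (X : S -> Prop) (HXS' : forall x, X x -> x <> z)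
  (HX : theta_constructible mul z X) :
  exists R : S -> Prop, right_ideal mul z R /\ (forall x, X x <-> (R x /\ x <> z)).
Proof.
  assert (Inv : forall h, hull mul z h -> forall x y s, h x y ->
     (mul x s <> z <-> mul y s <> z) /\ (mul x s <> z -> h (mul x s) (mul y s))).
  { intros h Hh; induction Hh as [t|g h Hg IHg Hh' IHh|h Hh' IH]; intros x y s Hxy.
    - destruct Hxy as [H1 [H2 H3]]; subst y.
      split; [split|].
      + intros Hxs. apply categorical0; assumption.
      + intros Hc Hxs. apply Hc. rewrite <- mul_assoc, Hxs. apply zero_r.
      + intros Hxs. split; [exact Hxs|split].
        * rewrite mul_assoc. apply categorical0; assumption.
        * symmetry; apply mul_assoc.
    - destruct Hxy as [w [H1 H2]].
      destruct (IHh x w s H1) as [A1 B1]. destruct (IHg w y s H2) as [A2 B2].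
      split.
      + rewrite A1. exact A2.
      + intros Hxs. exists (mul w s). split; [apply B1; exact Hxs|].
        apply B2. apply A1. exact Hxs.
    - unfold pinv in *. destruct (IH y x s Hxy) as [A B]. split.
      + symmetry; exact A.
      + intros Hxs. apply B. apply A. exact Hxs. }
  destruct HX as [h [Hh Hid]].
  exists (fun x => X x \/ x = z). split.
  - split.
    + right; reflexivity.
    + intros r s [Hr|Hr].
      * destruct (Hid r r) as [_ Hb]. specialize (Hb (conj eq_refl Hr)).
        destruct (Inv h Hh r r s Hb) as [_ B].
        destruct (Classical_Prop.classic (mul r s = z)) as [E|E]; [right; exact E|].
        left. exact (proj2 (proj1 (Hid _ _) (B E))).
      * right. subst r. apply zero_l.
  - intros x. split.
    + intros Hx. split; [left; exact Hx| apply HXS'; exact Hx].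
    + intros [[Hx|Hx] Hn]; [exact Hx| contradiction].
Qed.
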